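(* Let $X$ be a compact $T_1$ topological space. Then every contractive iterated function system on $X$ has a unique attractor, i.e. its induced Hutchinson operator $F:2^X\to 2^X$ has a unique fixed point.
   Context: An iterated function system (IFS) on $X$ is a finite family $\mathcal{F}=\{f_1,\dots,f_m\}$ of closed mappings $X\to X$ (mappings sending closed sets to closed sets; continuity not assumed). It is contractive if for every open cover $\mathcal{U}$ of $X$ there is $n\in\mathbb{N}$ such that for every sequence $(i_1,\dots,i_n)\in\{1,\dots,m\}^n$ the set $f_{i_1}\circ\cdots\circ f_{i_n}[X]$ is contained in some element of $\mathcal{U}$. $2^X$ denotes the family of nonempty closed subsets of $X$, the Hutchinson operator is $F(K)=\bigcup_{i=1}^m f_i[K]$, and an attractor is a fixed point $K\in 2^X$ of $F$. *)

(* Defs.v *)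
From HB Require Import structures.
From mathcomp Require Import all_boot all_order all_algebra.
From mathcomp Require Import all_classical all_reals all_analysis.
Set Implicit Arguments. Unset Strict Implicit. Unset Printing Implicit Defensive.
Local Open Scope classical_set_scope.

Definition closed_map (X : topologicalType) (f : X -> X) : Prop :=
  forall A : set X, closed A -> closed (f @` A).

Definition comp_word (X : Type) (m : nat) (f : 'I_m -> X -> X)
  (w : seq 'I_m) : X -> X := foldr (fun i g => f i \o g) id w.

Definition contractive (X : topologicalType) (m : nat) (f : 'I_m -> X -> X) : Prop :=
  forall U : set (set X),
    (forall A, U A -> open A) -> [set: X] `<=` \bigcup_(A in U) A ->
    exists n : nat, forall w : n.-tuple 'I_m,
      exists2 A, U A & comp_word f w @` [set: X] `<=` A.

Definition hutchinson (X : Type) (m : nat) (f : 'I_m -> X -> X) (K : set X) : set X :=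
  \bigcup_(i in [set: 'I_m]) (f i @` K).

(* Attractor: a fixed point of F in 2^X (nonempty closed subsets). *)
Definition attractor (X : topologicalType) (m : nat) (f : 'I_m -> X -> X) (K : set X) : Prop :=
  [/\ K !=set0, closed K & hutchinson f K = K].

(* Main.v *)
Require Import Defs.
From HB Require Import structures.
From mathcomp Require Import all_boot all_order all_algebra.
From mathcomp Require Import all_classical all_reals all_analysis.
Local Open Scope classical_set_scope.

Definition reach {X : Type} {m : nat} (f : 'I_m -> X -> X) (n : nat) (x : X) :=
  exists w : seq 'I_m, size w = n /\ exists y, x = comp_word f w y.

Lemma comp_word_cat (X : Type) (m : nat) (f : 'I_m -> X -> X) s t x :
  comp_word f (s ++ t) x = comp_word f s (comp_word f t x).
Proof. by elim: s => //= i s IH; rewrite IH. Qed.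

Lemma comp_word_closed (X : topologicalType) (m : nat) (f : 'I_m -> X -> X) :
  (forall i, closed_map (f i)) -> forall w, closed_map (comp_word f w).
Proof.
move=> cf; elim=> [|i w IH] A cA /=.
  by rewrite image_id.
have -> : (f i \o comp_word f w) @` A = f i @` (comp_word f w @` A).
  by rewrite image_comp.
exact/cf/IH.
Qed.
Arguments comp_word_closed {X m f}.

Lemma comp_word_inv (X : Type) (m : nat) (f : 'I_m -> X -> X) (L : set X) :
  (forall i y, L y -> L (f i y)) -> forall w y, L y -> L (comp_word f w y).
Proof. by move=> inv; elim=> [|i w IH] y Ly //=; apply/inv/IH. Qed.
Arguments comp_word_inv {X m f L}.

Lemma lemA (X : topologicalType) (m : nat) (f : 'I_m -> X -> X) (L : set X) x :
  accessible_space X -> contractive f -> L !=set0 -> closed L ->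
  (forall i y, L y -> L (f i y)) -> (forall n, reach f n x) -> L x.
Proof.
move=> acc ctr [l Ll] cL inv rx.
apply: contrapT => nLx.
pose U := [set A : set X | A = ~` L \/ A = ~` [set x]].
have [|z _|n Hn] := ctr U.
- move=> A [->|->]; rewrite openC //; exact: accessible_closed_set1.
- case: (pselect (L z)) => Lz.
    exists (~` [set x]); first by right.
    by move=> /= zx; apply: nLx; rewrite -zx.
  by exists (~` L); first by left.
have [w [sw [y xw]]] := rx n.
have [A [->|->] HA] := Hn (Tuple (introT eqP sw)).
  by apply: (HA (comp_word f w l)); [exists l | exact: comp_word_inv].
by apply: (HA x) => //; exists y.
Qed.
Arguments lemA {X m f L x}.

Lemma reach_mono (X : Type) (m : nat) (f : 'I_m -> X -> X) n x :
  reach f n.+1 x -> reach f n x.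
Proof.
move=> [w [sw [y ->]]].
exists (take n w); split; first by rewrite size_take sw ltnSn.
exists (comp_word f (drop n w) y); by rewrite -comp_word_cat cat_take_drop.
Qed.
Arguments reach_mono {X m f n x}.

Lemma reach_le (X : Type) (m : nat) (f : 'I_m -> X -> X) n k x :
  (k <= n)%N -> reach f n x -> reach f k x.
Proof.
elim: n => [|n IH]; first by rewrite leqn0 => /eqP ->.
rewrite leq_eqVlt => /orP [/eqP kn|]; first by rewrite kn.
rewrite ltnS => kn H. exact: IH kn (reach_mono H).
Qed.
Arguments reach_le {X m f n k x}.

Lemma reach_closed (X : topologicalType) (m : nat) (f : 'I_m -> X -> X) n :
  (forall i, closed_map (f i)) -> closed (reach f n).
Proof.
move=> cf.
have -> : reach f n = \bigcup_(w in [set: n.-tuple 'I_m]) range (comp_word f w).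
  apply/seteqP; split => x.
    move=> [w [sw [y ->]]]; exists (Tuple (introT eqP sw)) => //; by exists y.
  move=> [w _ [y _ <-]]; exists w; split; first exact: size_tuple.
  by exists y.
apply: closed_bigcup; first exact: finite_finset.
by move=> w _; apply: comp_word_closed => //; exact: closedT.
Qed.
Arguments reach_closed {X m f}.

Theorem theorem25 (X : topologicalType) (m : nat) (f : 'I_m -> X -> X) :
  compact [set: X] -> accessible_space X ->
  [set: X] !=set0 -> (0 < m)%N ->
  (forall i, closed_map (f i)) -> contractive f ->
  exists! K : set X, attractor f K.
Proof.
move=> cX acc [x0 _] m0 cf ctr.
pose i0 : 'I_m := Ordinal m0.
have attr_reach K : attractor f K -> forall x, K x -> forall n, reach f n x.
  move=> [_ _ FK] x Kx n; suff : exists w : seq 'I_m, size w = n /\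
      exists2 y, K y & x = comp_word f w y.
    by move=> [w [sw [y _ ->]]]; exists w; split => //; exists y.
  elim: n x Kx => [|n IH] x Kx; first by exists [::]; split => //; exists x.
  have : hutchinson f K x by rewrite FK.
  move=> -[i _ [y Ky <-]].
  have [w [sw [z Kz ->]]] := IH y Ky.
  by exists (i :: w); split; [rewrite /= sw | exists z].
have attr_sub K L : attractor f K -> attractor f L -> K `<=` L.
  move=> aK aL x Kx; have [L0 cL FL] := aL.
  apply: (lemA acc ctr L0 cL) => [i y Ly|]; last exact: attr_reach Kx.
  by rewrite -FL; exists i => //; exists y.
pose K0 := [set x | forall n, reach f n x].
have cK0 : closed K0.
  have -> : K0 = \bigcap_(n in [set: nat]) reach f n.
    by apply/seteqP; split => x H n //; apply: H.
  by apply: closed_bigI => n _; exact: reach_closed.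
have rn n : reach f n (comp_word f (nseq n i0) x0).
  by exists (nseq n i0); split; [rewrite size_nseq | exists x0].
have K0n : K0 !=set0.
  pose F := filter_from [set: nat] (reach f).
  have FF : Filter F.
    apply: filter_from_filter; first by exists 0%N.
    move=> i j _ _; exists (maxn i j) => // x H; split.
      by apply: reach_le H; exact: leq_maxl.
    by apply: reach_le H; exact: leq_maxr.
  have PF : ProperFilter F.
    by apply: filter_from_proper => n _; exists (comp_word f (nseq n i0) x0).
  have [p [_ clp]] := cX F PF (filterT).
  exists p => n.
  have -> : reach f n = closure (reach f n) by apply/closure_id/reach_closed.
  move=> B nB; apply: clp nB; by exists n.
have FK0 : hutchinson f K0 `<=` K0.
  move=> x [i _ [y Ky <-]] [|n]; first by exists [::]; split => //; exists (f i y).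
  have [w [sw [z ->]]] := Ky n.
  by exists (i :: w); split; [rewrite /= sw | exists z].
have cF : closed (hutchinson f K0).
  apply: closed_bigcup; first exact: finite_finset.
  by move=> i _; apply: cf.
have aK0 : attractor f K0.
  split => //; apply/seteqP; split => //.
  move=> x K0x; apply: (lemA acc ctr) => //.
  - have [y Ky] := K0n; exists (f i0 y); exists i0 => //; exists y.
  - move=> i y /FK0 Ky; exists i => //; exists y.
exists K0; split => // L aL.
by apply/seteqP; split; apply: attr_sub.
Qed.
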